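(* The Weighted Covering VCCR satisfies Positive Involvement in Defeat: for every linear profile $\mathbf P$ and $x,y\in X(\mathbf P)$, if $(x,y)\notin wc(\mathbf P)$ and $\mathbf P'$ is obtained from $\mathbf P$ by adding one new voter whose ballot ranks $y$ above $x$, then $(x,y)\notin wc(\mathbf P')$.
   Context: Profiles: $\mathbf P:V\to\mathcal L(X)$, $V$ nonempty finite set of voters, $X=X(\mathbf P)$ nonempty finite set of candidates, $\mathcal L(X)$ strict linear orders. $\mathrm{Margin}_{\mathbf P}(x,y)$ = #voters ranking $x$ above $y$ minus #ranking $y$ above $x$. Weighted Covering: $(x,y)\in wc(\mathbf P)$ iff $\mathrm{Margin}_{\mathbf P}(x,y)>0$ and $\mathrm{Margin}_{\mathbf P}(x,z)\ge\mathrm{Margin}_{\mathbf P}(y,z)$ for all $z\in X(\mathbf P)$. *)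

(* Defs.v *)
From mathcomp Require Import all_boot all_order all_algebra.
Set Implicit Arguments. Unset Strict Implicit. Unset Printing Implicit Defensive.
Import Order.TTheory GRing.Theory Num.Theory.
Local Open Scope ring_scope.

(* A ballot is a boolean relation [r] on the finite candidate type [X];
   [r a b] reads "a is ranked strictly above b". *)
Definition strict_linear_order (X : finType) (r : rel X) : Prop :=
  [/\ forall a, ~~ r a a,
      forall a b c, r a b -> r b c -> r a c
    & forall a b, a != b -> r a b || r b a].

(* A profile is a map P : V -> rel X (each value a strict linear order,
   imposed as a hypothesis); voters V and candidates X are finite types. *)
Definition margin (X V : finType) (P : V -> rel X) (a b : X) : int :=
  (#|[set v | P v a b]|)%:Z - (#|[set v | P v b a]|)%:Z.

Definition wc (X V : finType) (P : V -> rel X) (a b : X) : Prop :=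
  0 < margin P a b /\ forall z : X, margin P b z <= margin P a z.

Definition add_voter (X V : finType) (P : V -> rel X) (b : rel X) :
  option V -> rel X :=
  fun o => match o with Some v => P v | None => b end.

(* Main.v *)
Require Import Defs.
From mathcomp Require Import all_boot all_order all_algebra.
From mathcomp Require Import zify.
Import Order.TTheory GRing.Theory Num.Theory.

Lemma card_opt (V : finType) (f : pred (option V)) :
  #|[set o | f o]| = (f None + #|[set v | f (Some v)]|)%N.
Proof.
rewrite (cardsD1 None) inE.
congr (_ + _)%N.
rewrite -(card_imset [set v | f (Some v)] (@Some_inj _)).
apply: eq_card => o; rewrite !inE.
case: o => [v|] /=.
  by rewrite (mem_imset _ _ (@Some_inj _)) inE.
by apply/esym/negP => /imsetP [v _].
Qed.

Lemma margin_add (X V : finType) (P : V -> rel X) (b : rel X) a c :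
  margin (add_voter P b) a c =
  (margin P a c + (b a c : nat)%:Z - (b c a : nat)%:Z)%R.
Proof.
rewrite /margin !card_opt /=.
rewrite !PoszD. lia.
Qed.

Theorem proposition3p16 (X V : finType) (P : V -> rel X) (x y : X) (b : rel X) :
  (0 < #|X|)%N -> (0 < #|V|)%N ->
  (forall v, strict_linear_order (P v)) ->
  strict_linear_order b -> b y x ->
  ~ wc P x y -> ~ wc (add_voter P b) x y.
Proof.
move=> _ _ _ [irr tr tot] byx Hn [H1 H2]; apply: Hn.
have bxy : b x y = false.
  by apply/negbTE/negP => bxy; move: (irr x); rewrite (tr _ _ _ bxy byx).
split.
  move: H1; rewrite margin_add byx bxy /=; lia.
move=> z; move: (H2 z); rewrite !margin_add.
have [->|nzx] := eqVneq z x.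
  rewrite byx (negbTE (irr x)) /=; lia.
have [->|nzy] := eqVneq z y.
  rewrite bxy (negbTE (irr y)) /=; lia.
case bxz: (b x z).
  rewrite (tr _ _ _ byx bxz).
  have -> : b z x = false.
    by apply/negbTE/negP => bzx; move: (irr x); rewrite (tr _ _ _ bxz bzx).
  have -> : b z y = false.
    by apply/negbTE/negP => bzy; move: (irr z); rewrite (tr _ _ _ bzy (tr _ _ _ byx bxz)).
  simpl; lia.
have bzx : b z x by move: (tot _ _ nzx); rewrite bxz orbF.
rewrite bzx. case: (b y z); case: (b z y) => /=; lia.
Qed.
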